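(* Let $G$ be a graph and $X$ an $\operatorname{IR}(G)$-set. Then every flip-set $X'$ of $X$ is also an $\operatorname{IR}(G)$-set.
   Context: All graphs are finite and simple. For a graph $G=(V,E)$, $D\subseteq V$ and $v\in D$, $\operatorname{PN}(v,D)=N[v]-N[D-\{v\}]$ (closed neighbourhoods) and the set of external private neighbours is $\operatorname{EPN}(v,D)=\operatorname{PN}(v,D)-D$. A set $D$ is irredundant if $\operatorname{PN}(v,D)\neq\varnothing$ for every $v\in D$; $\operatorname{IR}(G)$ is the largest cardinality of an irredundant set, and an $\operatorname{IR}(G)$-set is an irredundant set of that cardinality. Flip-set: given an irredundant set $X$, split $X$ into disjoint sets $Y$ and $Z$ (either possibly empty) with $X=Y\cup Z$, such that every vertex of $Z$ is isolated in the induced subgraph $G[X]$ and every vertex $y\in Y$ has $\operatorname{EPN}(y,X)\neq\varnothing$; choose $y'\in\operatorname{EPN}(y,X)$ for each $y\in Y$ and let $Y'=\{y':y\in Y\}$. Then $X'=(X-Y)\cup Y'$ is called a flip-set of $X$ (using $Y'$). *)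

(* Defs.v *)
From mathcomp Require Import all_boot.
Set Implicit Arguments. Unset Strict Implicit. Unset Printing Implicit Defensive.

Section Graph.
Variables (T : finType) (e : rel T).

Definition simple_graph := symmetric e /\ irreflexive e.

Definition cnbhd (v : T) : {set T} := [set u | (u == v) || e v u].
Definition cnbhdS (S : {set T}) : {set T} := \bigcup_(v in S) cnbhd v.

Definition PN (v : T) (D : {set T}) : {set T} := cnbhd v :\: cnbhdS (D :\ v).
Definition EPN (v : T) (D : {set T}) : {set T} := PN v D :\: D.

Definition irredundant (D : {set T}) : Prop := forall v, v \in D -> PN v D != set0.

Definition IR_set (X : {set T}) : Prop :=
  irredundant X /\ forall D : {set T}, irredundant D -> #|D| <= #|X|.

Definition isolated_in (X : {set T}) (z : T) : Prop := forall x, x \in X -> ~~ e z x.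

(* X' is a flip-set of X: X = Y (disjoint union) Z, vertices of Z isolated in G[X],
   each y in Y gets a chosen y' = f y in EPN(y,X), Y' = f @: Y, X' = (X - Y) u Y'. *)
Definition flip_set (X X' : {set T}) : Prop :=
  exists (Y Z : {set T}) (f : T -> T),
    [/\ [disjoint Y & Z], X = Y :|: Z,
        (forall z, z \in Z -> isolated_in X z),
        (forall y, y \in Y -> f y \in EPN y X) &
        X' = (X :\: Y) :|: (f @: Y)].
End Graph.

(* Main.v *)
Require Import Defs.
From mathcomp Require Import all_boot.

Lemma PN_mem (T : finType) (e : rel T) u v (D : {set T}) :
  (u \in PN e v D) <-> ((u == v) || e v u) /\
     (forall w, w \in D -> w != v -> ~~ ((u == w) || e w u)).
Proof.
rewrite /PN /cnbhdS inE /cnbhd inE; split.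
- case/andP=> H1 H2; split=> // w wD wv; apply/negP=> Hw.
  move/negP: H1; apply; apply/bigcupP; exists w; first by rewrite !inE wv.
  by rewrite /cnbhd inE.
- case=> H1 H2; rewrite H1 andbT; apply/negP=> /bigcupP [w].
  rewrite !inE => /andP [wv wD]; by apply/negP; apply: H2.
Qed.

Theorem proposition2p2 (T : finType) (e : rel T) (X X' : {set T}) :
  simple_graph e -> IR_set e X -> flip_set e X X' -> IR_set e X'.
Proof.
move=> [sym _] [irrX maxX] [Y [Z [f [dYZ defX isoZ epn defX']]]].
have YX : Y \subset X by rewrite defX subsetUl.
have ZX : Z \subset X by rewrite defX subsetUr.
have XYZ : X :\: Y = Z.
  apply/setP=> x; rewrite defX !inE; case xY: (x \in Y) => //=.
  by rewrite (disjointFr dYZ xY).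
have epnP : forall y, y \in Y -> [/\ f y \notin X, (f y == y) || e y (f y) &
      forall w, w \in X -> w != y -> ~~ ((f y == w) || e w (f y))].
  move=> y yY; move: (epn y yY); rewrite /EPN inE => /andP [nX /PN_mem [H1 H2]].
  by split.
have finj : {in Y &, injective f}.
  move=> y1 y2 y1Y y2Y eqf; apply/eqP; apply/negPn/negP => ne.
  have [_ H1 _] := epnP y1 y1Y; have [_ _ H2] := epnP y2 y2Y.
  by move: (H2 y1 (subsetP YX _ y1Y) ne); rewrite -eqf H1.
have irr' : irredundant e X'.
  move=> v; rewrite defX' XYZ inE => /orP [vZ | /imsetP [y yY ->]].
  - apply/set0Pn; exists v; apply/PN_mem; split; first by rewrite eqxx.
    move=> w; rewrite inE => /orP [wZ | /imsetP [y yY ->]] wv.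
      by rewrite (eq_sym v w) (negbTE wv) /=; apply: (isoZ w wZ); apply: (subsetP ZX).
    have [nX _ H] := epnP y yY.
    have vy : v != y.
      by apply/negP=> /eqP vy; move: (disjointFr dYZ yY); rewrite -vy vZ.
    have := H v (subsetP ZX _ vZ) vy; rewrite sym; apply: contra => /orP [/eqP ->|->].
      by rewrite eqxx.
    by rewrite orbT.
  - apply/set0Pn; exists y; apply/PN_mem; split.
      by have [_ /orP [E|E] _] := epnP y yY; [rewrite eq_sym E | rewrite sym E orbT].
    move=> w; rewrite inE => /orP [wZ | /imsetP [y' y'Y ->]] wv.
    + have yw : y != w.
        by apply/negP=> /eqP yw; move: (disjointFr dYZ yY); rewrite yw wZ.
      by rewrite (negbTE yw) /=; apply: (isoZ w wZ); apply: (subsetP YX).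
    + have yy' : y' != y by apply/negP=> /eqP E; move: wv; rewrite E eqxx.
      have [nX _ H] := epnP y' y'Y.
      rewrite eq_sym in yy'; have := H y (subsetP YX _ yY) yy'.
      apply: contra => /orP [/eqP E|E]; last by rewrite sym E orbT.
      by move: nX; rewrite -E (subsetP YX _ yY).
have cardX' : #|X'| = #|X|.
  rewrite defX' cardsU.
  have -> : (X :\: Y) :&: (f @: Y) = set0.
    apply/setP=> x; rewrite !inE; apply/negP=> /andP [/andP [_ xX] /imsetP [y yY E]].
    by have [nX _ _] := epnP y yY; move: nX; rewrite -E xX.
  rewrite cards0 subn0 card_in_imset // -(cardsID Y X) addnC.
  by rewrite (setIidPr YX).
split=> // D irrD; rewrite cardX'; exact: maxX.
Qed.
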